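(* Suppose $\mathcal U$ is a smooth and strongly stable EDPM (with smoothness constant $d_2$). Then for any $K,T\ge1$, $$\tilde{\mathcal R}(\pi_{p^*},T)\le\frac{d_2}{2}\max_{i\in\mathbb K}\|F^{(i)}\|^2\,\frac{K^2}{T}.$$ Alternatively, if $\mathcal U$ is quasiconvex, then $p^*$ can be chosen to be a standard basis vector $e_{i^*}$ of $\mathbb R^K$, and for this choice $\tilde{\mathcal R}(\pi_{p^*},T)=0$ for all $T\ge1$.
   Context: Bandit setting: $K\ge1$, $\mathbb K=\{1,\dots,K\}$; arm $i$ produces i.i.d. rewards $X^{(i)}_1,X^{(i)}_2,\dots$ with distribution function $F^{(i)}$, all rewards mutually independent. $\Delta_{K-1}$ is the probability simplex, $F_p=\sum_ip_iF^{(i)}$, $\mathcal D^\Delta=\{F_p:p\in\Delta_{K-1}\}$; $\hat F^{(i)}_t(y)=\frac1t\sum_{s\le t}\mathbf 1\{X^{(i)}_s\le y\}$; $\hat{\mathcal D}$ is the set of empirical distribution functions $y\mapsto\frac1t\sum_{s\le t}\mathbf 1\{x_s\le y\}$ of all finite real sequences. $(L,\|\cdot\|)$ is a Banach space of bounded functions on $\mathbb R$ containing $\mathcal D^\Delta\cup\hat{\mathcal D}$, $\mathcal U:L\to\mathbb R$, and $L(L,\mathbb R)$ is the space of bounded linear functionals on $L$. Strongly stable: (1) there exist $b>0,q\ge1$ with $|\mathcal U(F)-\mathcal U(G)|\le b(\|F-G\|+\|F-G\|^q)$ for all $F\in\mathcal D^\Delta$, $G\in\mathcal D^\Delta\cup\hat{\mathcal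 D}$; (2) there is $a>0$ with $\mathbb P(\|\hat F^{(i)}_t-F^{(i)}\|\ge x)\le2\exp(-atx^2)$ for all $i,x>0,t\ge1$. Smooth: there exist $d_1,d_2\ge0$, $M_0>0$ and a map $A:L\to L(L,\mathbb R)$, $F\mapsto A_F$, such that for every $F\in\mathcal D^\Delta$: $|A_F(G-F)|\le d_1\|G-F\|$ for all $G\in\mathcal D^\Delta\cup\hat{\mathcal D}$, and $|\mathcal U(G)-\mathcal U(F)-A_F(G-F)|\le\frac12d_2\|G-F\|^2$ for all $G\in\mathcal D^\Delta\cup\{f\in\hat{\mathcal D}:\|F-f\|\le M_0\}$. Quasiconvex: $\mathcal U(\lambda F+(1-\lambda)G)\le\max\{\mathcal U(F),\mathcal U(G)\}$. Let $p^*\in\arg\max_{p\in\Delta_{K-1}}\mathcal U(F_p)$. $\pi_{p^*}$ is the policy whose actions $\pi_1,\pi_2,\dots\in\mathbb K$ are i.i.d. (independent of rewards) with $\mathbb P(\pi_t=i)=p^*_i$; $\tau_i(T)=\sum_{t\le T}\mathbf 1\{\pi_t=i\}$, $\tilde F^\pi_T=\frac1T\sum_i\tau_i(T)F^{(i)}$, and $\tilde{\mathcal R}(\pi,T)=\mathbb E[\mathcal U(F_{p^*})-\mathcal U(\tilde F^\pi_T)]$. *)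

(* Defs.v *)
From HB Require Import structures.
From mathcomp Require Import all_boot all_order all_algebra.
From mathcomp Require Import all_classical all_reals all_analysis.
Set Implicit Arguments. Unset Strict Implicit. Unset Printing Implicit Defensive.
Import Order.TTheory GRing.Theory Num.Theory.
Import numFieldNormedType.Exports.
Local Open Scope classical_set_scope.
Local Open Scope ring_scope.

Section Bandit.
Variable R : realType.

Definition simplex (K : nat) (p : 'I_K -> R) : Prop :=
  (forall i, 0 <= p i) /\ \sum_(i < K) p i = 1.

Definition basis_vec (K : nat) (i : 'I_K) : 'I_K -> R := fun j => (j == i)%:R.

Definition emp_cdf (s : seq R) : R -> R :=
  fun y => (count (fun x => x <= y) s)%:R / (size s)%:R.

(* The Banach space L is a complete normed space V together with an injective
   linear map iota : V -> (R -> R) whose images are bounded functions. *)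
Definition bounded_fun_space (V : normedModType R) (iota : V -> R -> R) : Prop :=
  (forall (a : R) (v w : V) (y : R), iota (a *: v + w) y = a * iota v y + iota w y)
  /\ injective iota
  /\ (forall v : V, exists M : R, forall y, `|iota v y| <= M).

Variables (K : nat) (V : normedModType R).

Definition mixture (Fv : 'I_K -> V) (p : 'I_K -> R) : V := \sum_(i < K) p i *: Fv i.

Definition DDelta (Fv : 'I_K -> V) : set V := [set mixture Fv p | p in simplex (K:=K)].

Definition Dhat (iota : V -> R -> R) : set V :=
  [set v | exists s : seq R, s != [::] /\ iota v = emp_cdf s].

Definition bounded_linear_functional (f : V -> R) : Prop :=
  (forall (a : R) (v w : V), f (a *: v + w) = a * f v + f w)
  /\ exists C : R, forall v, `|f v| <= C * `|v|.

Definition smooth (U : V -> R) (Fv : 'I_K -> V) (iota : V -> R -> R)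
  (d1 d2 M0 : R) (A : V -> V -> R) : Prop :=
  [/\ 0 <= d1, 0 <= d2, 0 < M0,
      (forall F, bounded_linear_functional (A F)) &
      forall F, DDelta Fv F ->
        (forall G, DDelta Fv G \/ Dhat iota G -> `|A F (G - F)| <= d1 * `|G - F|)
        /\ (forall G, DDelta Fv G \/ (Dhat iota G /\ `|F - G| <= M0) ->
              `|U G - U F - A F (G - F)| <= d2 / 2 * `|G - F| ^+ 2)].

(* the first t rewards X^(i)_1, ..., X^(i)_t of arm i (X i s is X^(i)_{s+1}) *)
Definition samples {T : Type} (X : 'I_K -> nat -> T -> R) (i : 'I_K) (t : nat) (w : T)
  : seq R := [seq X i s w | s <- iota 0 t].

Definition strongly_stable {d} {Omega : measurableType d} (P : probability Omega R)
  (X : 'I_K -> nat -> Omega -> R)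
  (U : V -> R) (Fv : 'I_K -> V) (iota : V -> R -> R) : Prop :=
  (exists b q : R, [/\ 0 < b, 1 <= q &
     forall F G, DDelta Fv F -> DDelta Fv G \/ Dhat iota G ->
       `|U F - U G| <= b * (`|F - G| + `|F - G| `^ q)])
  /\ (exists a : R, 0 < a /\
     forall (i : 'I_K) (x : R) (t : nat), 0 < x -> (1 <= t)%N ->
       fine (P [set w | exists v, iota v = emp_cdf (samples X i t w)
                                  /\ x <= `|v - Fv i|])
         <= 2 * expR (- (a * t%:R * x ^+ 2))).

Definition quasiconvex (U : V -> R) : Prop :=
  forall (F G : V) (l : R), 0 <= l <= 1 ->
    U (l *: F + (1 - l) *: G) <= Num.max (U F) (U G).

Definition is_argmax (U : V -> R) (Fv : 'I_K -> V) (p : 'I_K -> R) : Prop :=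
  simplex p /\ forall q, simplex q -> U (mixture Fv q) <= U (mixture Fv p).

Definition pulls (T : nat) (a : {ffun 'I_T -> 'I_K}) (i : 'I_K) : nat :=
  #|[set t | a t == i]|.

Definition Ftilde (Fv : 'I_K -> V) (T : nat) (a : {ffun 'I_T -> 'I_K}) : V :=
  \sum_(i < K) ((pulls a i)%:R / T%:R) *: Fv i.

(* tilde R(pi_p, T) = E[U(F_p) - U(tilde F^pi_T)], the expectation being over the
   i.i.d. actions pi_1..pi_T with P(pi_t = i) = p_i (the quantity does not
   depend on the rewards). *)
Definition proxy_regret (U : V -> R) (Fv : 'I_K -> V) (p : 'I_K -> R) (T : nat) : R :=
  \sum_(a : {ffun 'I_T -> 'I_K})
     (\prod_(t < T) p (a t)) * (U (mixture Fv p) - U (Ftilde Fv a)).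

End Bandit.

Definition mutually_independent {R : realType} {d} {Omega : measurableType d}
  (P : probability Omega R) {I : eqType} (Y : I -> Omega -> R) : Prop :=
  forall (J : seq I), uniq J -> forall B : I -> set R, (forall j, measurable (B j)) ->
    fine (P (\bigcap_(j in [set` J]) (Y j @^-1` B j)))
    = \prod_(j <- J) fine (P (Y j @^-1` B j)).

(* Main.v *)
Require Import Defs.
From HB Require Import structures.
From mathcomp Require Import all_boot all_order all_algebra.
From mathcomp Require Import all_classical all_reals all_analysis.
From mathcomp Require Import ring lra.
Import Order.TTheory GRing.Theory Num.Theory.
Import numFieldNormedType.Exports.
Local Open Scope classical_set_scope.
Local Open Scope ring_scope.

Section Aux.
Variables (R : realType) (K : nat).

Definition Ew (T : nat) (p : 'I_K -> R) (f : {ffun 'I_T -> 'I_K} -> R) : R :=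
  \sum_(a : {ffun 'I_T -> 'I_K}) (\prod_(t < T) p (a t)) * f a.
Arguments Ew {T}.

Lemma Ew_prod T p (h : 'I_T -> 'I_K -> R) :
  Ew p (fun a => \prod_(t < T) h t (a t)) = \prod_(t < T) \sum_j p j * h t j.
Proof.
rewrite /Ew bigA_distr_bigA /=; apply: eq_bigr => a _.
by rewrite big_split.
Qed.

Lemma EwD T p (f g : {ffun 'I_T -> 'I_K} -> R) :
  Ew p (fun a => f a + g a) = Ew p f + Ew p g.
Proof. by rewrite /Ew -big_split; apply: eq_bigr => a _; rewrite mulrDr. Qed.

Lemma EwZ T p c (f : {ffun 'I_T -> 'I_K} -> R) :
  Ew p (fun a => c * f a) = c * Ew p f.
Proof. by rewrite /Ew mulr_sumr; apply: eq_bigr => a _; rewrite mulrCA. Qed.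

Lemma EwN T p (f : {ffun 'I_T -> 'I_K} -> R) :
  Ew p (fun a => - f a) = - Ew p f.
Proof. by rewrite -mulN1r -EwZ; apply: eq_bigr => a _; rewrite mulN1r. Qed.

Lemma Ew_sum T p (I : finType) (f : I -> {ffun 'I_T -> 'I_K} -> R) :
  Ew p (fun a => \sum_i f i a) = \sum_i Ew p (f i).
Proof. rewrite /Ew; under eq_bigr do rewrite mulr_sumr; exact: exchange_big. Qed.

Lemma Ew_le T p (f g : {ffun 'I_T -> 'I_K} -> R) :
  (forall i, 0 <= p i) -> (forall a, f a <= g a) -> Ew p f <= Ew p g.
Proof.
move=> p0 fg; apply: ler_sum => a _; apply: ler_wpM2l => //.
by apply: prodr_ge0 => t _.
Qed.

Lemma Ew_ext T p (f g : {ffun 'I_T -> 'I_K} -> R) :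
  (forall a, f a = g a) -> Ew p f = Ew p g.
Proof. by move=> fg; apply: eq_bigr => a _; rewrite fg. Qed.

Lemma Ew1 T p : \sum_j p j = 1 -> Ew p (fun _ : {ffun 'I_T -> 'I_K} => 1) = 1.
Proof.
move=> s1; transitivity (Ew p (fun a => \prod_(t < T) (fun _ _ => 1 : R) t (a t))).
  by apply: Ew_ext => a; rewrite big1.
rewrite (Ew_prod _ p (fun _ _ => 1)); apply: big1 => t _; under eq_bigr do rewrite mulr1; exact: s1.
Qed.

Lemma prod_pick T (t0 : 'I_T) (g : 'I_T -> R) :
  \prod_(t < T) (if t == t0 then g t else 1) = g t0.
Proof. by rewrite -big_mkcond big_pred1_eq. Qed.

Definition Y T (p : 'I_K -> R) (t : 'I_T) (i : 'I_K) (a : {ffun 'I_T -> 'I_K}) : R :=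
  (a t == i)%:R - p i.
Arguments Y {T}.

Lemma sum_pY (p : 'I_K -> R) i : \sum_j p j = 1 -> \sum_j p j * ((j == i)%:R - p i) = 0.
Proof.
move=> s1; under eq_bigr do rewrite mulrBr.
rewrite sumrB -mulr_suml s1 mul1r (bigD1 i) //= eqxx mulr1 big1 ?addr0 ?subrr //.
by move=> j /negbTE ->; rewrite mulr0.
Qed.

Lemma EY T p t i : \sum_j p j = 1 -> Ew p (@Y T p t i) = 0.
Proof.
move=> s1.
transitivity (Ew p (fun a => \prod_(s < T)
   (fun s j => if s == t then (j == i)%:R - p i else 1) s (a s))).
  apply: Ew_ext => a /=; rewrite (prod_pick _ t (fun s => (a s == i)%:R - p i)) //.
rewrite (Ew_prod _ p (fun s j => if s == t then (j == i)%:R - p i else 1)) (bigD1 t) //= eqxx.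
by rewrite sum_pY // mul0r.
Qed.

Lemma EYY T p t s i : \sum_j p j = 1 -> t != s ->
  Ew p (fun a => @Y T p t i a * @Y T p s i a) = 0.
Proof.
move=> s1 ts.
transitivity (Ew p (fun a => \prod_(r < T)
   (fun r j => (if r == t then (j == i)%:R - p i else 1) *
               (if r == s then (j == i)%:R - p i else 1)) r (a r))).
  apply: Ew_ext => a /=; rewrite big_split /=.
  by rewrite (prod_pick _ t (fun r => (a r == i)%:R - p i))
             (prod_pick _ s (fun r => (a r == i)%:R - p i)).
rewrite (Ew_prod _ p (fun r j => (if r == t then (j == i)%:R - p i else 1) *
               (if r == s then (j == i)%:R - p i else 1))) (bigD1 t) //= eqxx (negbTE ts).
under eq_bigr do rewrite mulr1; by rewrite sum_pY // mul0r.
Qed.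

Lemma p_le1 (p : 'I_K -> R) i : (forall j, 0 <= p j) -> \sum_j p j = 1 -> p i <= 1.
Proof.
move=> p0 s1; rewrite -s1 (bigD1 i) //= lerDl; exact: sumr_ge0.
Qed.

Lemma EY2 T p t i : (forall j, 0 <= p j) -> \sum_j p j = 1 ->
  Ew p (fun a => @Y T p t i a * @Y T p t i a) <= 1.
Proof.
move=> p0 s1; rewrite -(Ew1 T _ s1); apply: Ew_le => // a.
have h0 := p0 i; have h1 := p_le1 _ i p0 s1.
rewrite /Y; case: (a t == i) => /=; nra.
Qed.

Lemma sq_sum (x : 'I_K -> R) : (\sum_i x i) ^+ 2 <= K%:R * \sum_i x i ^+ 2.
Proof.
rewrite expr2 mulr_suml.
apply: (@le_trans _ _ (\sum_i \sum_j (x i ^+ 2 + x j ^+ 2) / 2)).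
  apply: ler_sum => i _; rewrite mulr_sumr; apply: ler_sum => j _.
  have := sqr_ge0 (x i - x j); nra.
have -> : \sum_(i < K) \sum_(j < K) (x i ^+ 2 + x j ^+ 2) / 2 = \sum_(i < K) (\sum_(j < K) x i ^+ 2 / 2 + \sum_(j < K) x j ^+ 2 / 2).
  apply: eq_bigr => i _; rewrite -big_split; apply: eq_bigr => j _; by rewrite mulrDl.
rewrite big_split /=.
have h1 : \sum_(i<K) \sum_(j<K) x i ^+ 2 / 2 = K%:R * (\sum_i x i ^+ 2) / 2.
  rewrite mulr_sumr mulr_suml; apply: eq_bigr => i _.
  by rewrite sumr_const card_ord -[_ *+ K]mulr_natl mulrA.
have h2 : \sum_(i<K) \sum_(j<K) x j ^+ 2 / 2 = K%:R * (\sum_i x i ^+ 2) / 2.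
  by rewrite sumr_const card_ord -mulr_suml -[_ *+ K]mulr_natl mulrA.
rewrite h1 h2; set Z := K%:R * _; lra.
Qed.


Lemma blf_sum (V : normedModType R) (f : V -> R) : bounded_linear_functional f ->
  forall (c : 'I_K -> R) (G : 'I_K -> V), f (\sum_i c i *: G i) = \sum_i c i * f (G i).
Proof.
move=> [hf _] c G.
have f0 : f 0 = 0.
  have h := hf 1 0 0; rewrite scale1r addr0 mul1r in h; lra.
apply: (big_rec2 (fun x y => f x = y)) => // i x y _ <-.
have := hf (c i) (G i) x; by [].
Qed.

Lemma norm_bound (V : normedModType R) (Fv : 'I_K -> V) (c : 'I_K -> R) :
  `|\sum_i c i *: Fv i| ^+ 2 <=
    K%:R * (\big[Num.max/0]_(i < K) `|Fv i| ^+ 2) * \sum_i c i ^+ 2.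
Proof.
set Mx := \big[Num.max/0]_(i < K) `|Fv i| ^+ 2.
have h1 : `|\sum_i c i *: Fv i| <= \sum_i `|c i| * `|Fv i|.
  apply: le_trans (ler_norm_sum _ _ _) _.
  by apply: ler_sum => i _; rewrite normrZ.
apply: (@le_trans _ _ ((\sum_i `|c i| * `|Fv i|) ^+ 2)).
  rewrite !expr2; apply: ler_pM => //.
apply: le_trans (sq_sum _) _.
rewrite -mulrA; apply: ler_wpM2l => //.
rewrite mulr_sumr; apply: ler_sum => i _.
rewrite exprMn real_normK ?num_real // mulrC; apply: ler_wpM2r.
  exact: sqr_ge0.
exact: le_bigmax.
Qed.


Lemma pullsE T (a : {ffun 'I_T -> 'I_K}) i :
  (pulls a i)%:R = \sum_(t < T) (a t == i)%:R :> R.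
Proof.
rewrite /pulls -sum1_card natr_sum big_mkcond /=; apply: eq_bigr => t _.
have -> : (t \in in_set [set t0 | a t0 == i]) = (a t == i).
  by rewrite unfold_in /= asboolb.
by case: (a t == i).
Qed.

Lemma sum_pulls T (a : {ffun 'I_T -> 'I_K}) :
  \sum_i (pulls a i)%:R = T%:R :> R.
Proof.
under eq_bigr do rewrite pullsE.
rewrite exchange_big /=; transitivity (\sum_(t < T) (1:R)); last by rewrite sumr_const card_ord.
apply: eq_bigr => t _.
rewrite (bigD1 (a t)) //= eqxx big1 ?addr0 // => j.
by rewrite eq_sym => /negbTE ->.
Qed.

Lemma part1 (V : normedModType R) (iota : V -> R -> R) (Fv : 'I_K -> V) (U : V -> R)
  (hK : (0 < K)%N) (d1 d2 M0 : R) (A : V -> V -> R) :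
  smooth U Fv iota d1 d2 M0 A ->
  forall p : 'I_K -> R, simplex p ->
  forall T : nat, (1 <= T)%N ->
    proxy_regret U Fv p T
      <= d2 / 2 * (\big[Num.max/0]_(i < K) `|Fv i| ^+ 2) * (K%:R ^+ 2 / T%:R).
Proof.
move=> [hd1 hd2 hM0 hA hsm] p hp T hT.
have [p0 s1] := hp.
set Fp := mixture Fv p.
set Mx := \big[Num.max/0]_(i < K) `|Fv i| ^+ 2.
have FpD : DDelta Fv Fp by exists p.
have Tpos : 0 < T%:R :> R by rewrite ltr0n.
pose c := fun (i : 'I_K) (a : {ffun 'I_T -> 'I_K}) => (pulls a i)%:R / T%:R - p i.
have cE : forall a i, c i a = T%:R^-1 * \sum_t Y p t i a.
  move=> a i; rewrite /c /Y sumrB -pullsE sumr_const card_ord -mulr_natl.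
  field; exact: lt0r_neq0.
have GD : forall a : {ffun 'I_T -> 'I_K}, DDelta Fv (Ftilde Fv a).
  move=> a; exists (fun i => (pulls a i)%:R / T%:R) => //; split.
    by move=> i; apply: divr_ge0.
  by rewrite -mulr_suml sum_pulls divff // lt0r_neq0.
have diffE : forall a : {ffun 'I_T -> 'I_K}, Ftilde Fv a - Fp = \sum_i c i a *: Fv i.
  by move=> a; rewrite /Ftilde /Fp /mixture -sumrB; apply: eq_bigr => i _; rewrite scalerBl.
have hb : forall a : {ffun 'I_T -> 'I_K}, U Fp - U (Ftilde Fv a) <=
    - \sum_i c i a * A Fp (Fv i) + d2 / 2 * (K%:R * Mx * \sum_i c i a ^+ 2).
  move=> a; have [_ h2] := hsm Fp FpD.
  have := h2 (Ftilde Fv a) (or_introl (GD a)).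
  rewrite diffE (@blf_sum _ _ (hA Fp)) ler_norml => /andP [hl _].
  have nb := norm_bound _ Fv (fun i => c i a).
  have d20 : 0 <= d2 / 2 by apply: divr_ge0.
  have := ler_wpM2l d20 nb; rewrite -/Mx; lra.
have Ec : forall i, Ew p (c i) = 0.
  move=> i; rewrite (@Ew_ext _ p (c i) (fun a => T%:R^-1 * \sum_t Y p t i a)) //.
  rewrite (EwZ _ p _ (fun a => \sum_t Y p t i a)) Ew_sum big1 ?mulr0 // => t _.
  exact: EY.
have Ec2 : forall i, Ew p (fun a => c i a ^+ 2) <= T%:R^-1.
  move=> i.
  rewrite (@Ew_ext _ p _ (fun a => (T%:R^-1) ^+ 2 * \sum_t \sum_s Y p t i a * Y p s i a)); last first.
    move=> a; rewrite cE exprMn [X in _ * X = _]expr2 mulr_suml; congr (_ * _).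
    by apply: eq_bigr => t _; rewrite mulr_sumr.
  rewrite (EwZ _ p _ (fun a => \sum_t \sum_s Y p t i a * Y p s i a)) Ew_sum.
  under eq_bigr do rewrite Ew_sum.
  have h : \sum_(t < T) \sum_(s < T) Ew p (fun a => Y p t i a * Y p s i a) <= T%:R.
    apply: (@le_trans _ _ (\sum_(t < T) (1 : R))); last by rewrite sumr_const card_ord.
    apply: ler_sum => t _; rewrite (bigD1 t) //= big1 ?addr0; first exact: EY2.
    by move=> s hs; apply: EYY; rewrite // eq_sym.
  apply: le_trans (ler_wpM2l _ h) _; first exact: sqr_ge0.
  by rewrite expr2 -mulrA mulVf ?mulr1 // lt0r_neq0.
change (Ew p (fun a : {ffun 'I_T -> 'I_K} => U Fp - U (Ftilde Fv a)) <= d2 / 2 * Mx * (K%:R ^+ 2 / T%:R)).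
apply: le_trans (@Ew_le T p _ _ p0 hb) _.
rewrite EwD EwN Ew_sum.
have -> : \sum_i Ew p (fun a => c i a * A Fp (Fv i)) = 0.
  apply: big1 => i _.
  rewrite (@Ew_ext _ p _ (fun a => A Fp (Fv i) * c i a)) => [|a]; last exact: mulrC.
  by rewrite (EwZ _ p _ (c i)) Ec mulr0.
rewrite oppr0 add0r.
rewrite (EwZ _ p _ (fun a => K%:R * Mx * \sum_i c i a ^+ 2)).
rewrite (EwZ _ p _ (fun a => \sum_i c i a ^+ 2)) Ew_sum.
have hS : \sum_i Ew p (fun a => c i a ^+ 2) <= K%:R * T%:R^-1.
  apply: le_trans (ler_sum _ (fun i _ => Ec2 i)) _.
  by rewrite sumr_const card_ord mulr_natl.
have Mx0 : 0 <= Mx.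
  apply: le_trans (le_bigmax 0 (fun i => `|Fv i| ^+ 2) (Ordinal hK)); exact: sqr_ge0.
set S := \sum_i _.
have e1 : d2 / 2 * (K%:R * Mx * S) = (d2 / 2 * K%:R * Mx) * S by ring.
have e2 : d2 / 2 * Mx * (K%:R ^+ 2 / T%:R) = (d2 / 2 * K%:R * Mx) * (K%:R * T%:R^-1) by ring.
rewrite e1 e2; apply: ler_wpM2l => //.
apply: mulr_ge0 => //; apply: mulr_ge0 => //; exact: divr_ge0.
Qed.

Lemma qc_bound (V : normedModType R) (U : V -> R) (hq : quasiconvex U) (m : R) :
  forall n (w : 'I_n -> R) (G : 'I_n -> V), (forall j, 0 <= w j) ->
  \sum_j w j = 1 -> (forall j, U (G j) <= m) -> U (\sum_j w j *: G j) <= m.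
Proof.
elim=> [|n IH] w G w0 s1 hG.
  by move: s1; rewrite big_ord0 => /eqP; rewrite eq_sym oner_eq0.
rewrite big_ord_recl; rewrite big_ord_recl in s1.
set s := \sum_(i < n) w (lift ord0 i) in s1.
have s0 : 0 <= s by apply: sumr_ge0.
have [sz|snz] := eqVneq s 0.
  have hz := (psumr_eq0P (fun i _ => w0 (lift ord0 i)) sz).
  rewrite big1 ?addr0; last by move=> i _; rewrite hz // scale0r.
  have -> : w ord0 = 1 by rewrite -s1 sz addr0.
  by rewrite scale1r.
have spos : 0 < s by rewrite lt0r snz.
set H := \sum_(i < n) (w (lift ord0 i) / s) *: G (lift ord0 i).
have hH : U H <= m.
  apply: IH => //.
    by move=> j; apply: divr_ge0.
  by rewrite -mulr_suml divff.
have -> : \sum_(i < n) w (lift ord0 i) *: G (lift ord0 i) = s *: H.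
  rewrite /H scaler_sumr; apply: eq_bigr => i _.
  by rewrite scalerA mulrCA divff ?mulr1.
have -> : s = 1 - w ord0 by rewrite -s1; ring.
have hw : 0 <= w ord0 <= 1.
  apply/andP; split => //; lra.
apply: le_trans (hq _ _ _ hw) _.
by rewrite ge_max hH hG.
Qed.

Lemma mixture_basis (V : normedModType R) (Fv : 'I_K -> V) (i : 'I_K) :
  mixture Fv (basis_vec R i) = Fv i.
Proof.
rewrite /mixture (bigD1 i) //= /basis_vec eqxx scale1r big1 ?addr0 //.
by move=> j /negbTE ->; rewrite scale0r.
Qed.

Lemma simplex_basis (i : 'I_K) : simplex (basis_vec R i).
Proof.
split; first by move=> j; rewrite /basis_vec ler0n.
rewrite (bigD1 i) //= /basis_vec eqxx big1 ?addr0 //.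
by move=> j /negbTE ->.
Qed.

Lemma part2 (V : normedModType R) (Fv : 'I_K -> V) (U : V -> R) (hK : (0 < K)%N) :
  quasiconvex U ->
     exists istar : 'I_K,
       is_argmax U Fv (basis_vec R istar)
       /\ forall T : nat, (1 <= T)%N -> proxy_regret U Fv (basis_vec R istar) T = 0.
Proof.
move=> hq.
case: (@arg_maxP _ R 'I_K (Ordinal hK) xpredT (fun i => U (Fv i)) isT) => i _ hi.
exists i; split.
  split; first exact: simplex_basis.
  move=> q [q0 s1]; rewrite mixture_basis.
  apply: qc_bound => // j; exact: hi.
move=> T hT; have Tpos : 0 < T%:R :> R by rewrite ltr0n.
apply: big1 => a _.
case: (boolP [forall t, a t == i]) => H.
  have hall : forall t, a t = i by move=> t; apply/eqP; exact: (forallP H t).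
  have -> : Ftilde Fv a = mixture Fv (basis_vec R i).
    apply: eq_bigr => j _; congr (_ *: _).
    rewrite pullsE /basis_vec.
    under eq_bigr do rewrite hall.
    by rewrite sumr_const card_ord -[_ *+ T]mulr_natr mulfK ?lt0r_neq0 // eq_sym.
  by rewrite subrr mulr0.
move/forallPn: H => [t ht].
by rewrite (bigD1 t) //= /basis_vec (negbTE ht) !mul0r.
Qed.

End Aux.

Theorem proposition17 (R : realType) (K : nat) (hK : (0 < K)%N)
  (V : completeNormedModType R) (iota : V -> R -> R)
  (hL : bounded_fun_space iota)
  (Fv : 'I_K -> V)
  (hDhat : forall s : seq R, s != [::] -> exists v : V, iota v = emp_cdf s)
  (d : measure_display) (Omega : measurableType d) (P : probability Omega R)
  (X : 'I_K -> nat -> Omega -> R)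
  (hXmeas : forall i s, measurable_fun setT (X i s))
  (hXind : mutually_independent P (fun js : 'I_K * nat => X js.1 js.2))
  (hXcdf : forall i s y, fine (P [set w | X i s w <= y]) = iota (Fv i) y)
  (U : V -> R) :
  (forall (d1 d2 M0 : R) (A : V -> V -> R),
     smooth U Fv iota d1 d2 M0 A ->
     strongly_stable P X U Fv iota ->
     forall pstar : 'I_K -> R, is_argmax U Fv pstar ->
     forall T : nat, (1 <= T)%N ->
       proxy_regret U Fv pstar T
         <= d2 / 2 * (\big[Num.max/0]_(i < K) `|Fv i| ^+ 2) * (K%:R ^+ 2 / T%:R))
  /\
  (quasiconvex U ->
     exists istar : 'I_K,
       is_argmax U Fv (basis_vec R istar)
       /\ forall T : nat, (1 <= T)%N -> proxy_regret U Fv (basis_vec R istar) T = 0).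
Proof.
split.
  move=> d1 d2 M0 A hs _ pstar [hp _] T hT.
  exact: (@part1 R K V iota Fv U hK d1 d2 M0 A hs pstar hp T hT).
move=> hq; exact: (@part2 R K V Fv U hK hq).
Qed.
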